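(* For a morphism $F:\mathcal C\to\mathcal D$ of cylinder categories, the following are equivalent: (1) $F$ is homotopy fully faithful; (2) for every object $A$ of $\mathcal C$, the functor $hF_A:h\mathcal C(A)\to h\mathcal D(F(A))$ is full; (3) for every object $A$ of $\mathcal C$, the morphism $F_A:\mathcal C(A)\to\mathcal D(F(A))$ is homotopy fully faithful; (4) for every object $A$ of $\mathcal C$, $hF_A:h\mathcal C(A)\to h\mathcal D(F(A))$ is fully faithful.
   Context: A cylinder category is a category $\mathcal C$ with two classes of morphisms, the cofibrations and the weak equivalences (morphisms in both classes are called trivial cofibrations), such that: (1) both classes contain all isomorphisms and are closed under composition; (2) weak equivalences satisfy 2-out-of-6: if $f,g,h$ are composable and $f\circ g$, $g\circ h$ are weak equivalences then $f,g,h,f\circ g\circ h$ are; (3) $\mathcal C$ has an initial object $0$ and every $0\to X$ is a cofibration; (4) pushouts of cofibrations along arbitrary maps exist and are cofibrations; (5) pushouts of trivial cofibrations are trivial cofibrations; (6) for every object $X$ the codiagonal $X\sqcup X\to X$ factors as a cofibration $X\sqcup X\hookrightarrow IX$ followed by a weak equivalence $IX\to X$; (7) every trivial cofibration admits a retraction. A morphism of cylinder categories is a functor preserving cofibrations, weak equivalences, the initial object and pushouts along cofibrations. For a cofibration $A\hookrightarrow B$, a relative cylinder object is a factorization $B\sqcup_A B\hookrightarrow I_AB\xrightarrow{\sim}B$ of the codiagonal into a cofibration followed by a weak equivalence. Two maps $f,g:B\to X$ with $f|_A=g|_A$ are homotopic relative to $A$, written $f\sim_A g$, if $(f,g):B\sqcup_AB\to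 X$ extends to $I_AB\to X$ for some relative cylinder object; homotopy $f\sim g$ is the case $A=0$. $h\mathcal C$ denotes the homotopy category: same objects as $\mathcal C$, morphisms the homotopy classes of morphisms (this is a category and is the localization of $\mathcal C$ at weak equivalences). For an object $A$, $\mathcal C(A)$ is the category whose objects are cofibrations $A\hookrightarrow B$ and morphisms commutative triangles under $A$, with cofibrations and weak equivalences those of $\mathcal C$; it is a cylinder category. A morphism $F$ induces a morphism $F_A:\mathcal C(A)\to\mathcal D(F(A))$ and a functor $hF_A$ on homotopy categories. $F$ is homotopy fully faithful if for every cofibration $i:A\hookrightarrow B$ in $\mathcal C$, every arrow $x:A\to X$ in $\mathcal C$, and every $v:F(B)\to F(X)$ in $\mathcal D$ with $v\circ F(i)=F(x)$, there is $v':B\to X$ in $\mathcal C$ with $v'\circ i=x$ and $F(v')\sim_{F(A)} v$. *)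

(* Defs.v *)
From Stdlib Require Import ProofIrrelevance.
Set Implicit Arguments.
Unset Strict Implicit.

Record Category := {
  Ob :> Type;
  Hom : Ob -> Ob -> Type;
  idm : forall X, Hom X X;
  cmp : forall X Y Z, Hom Y Z -> Hom X Y -> Hom X Z;
  cmp_id_l : forall X Y (f : Hom X Y), cmp (idm Y) f = f;
  cmp_id_r : forall X Y (f : Hom X Y), cmp f (idm X) = f;
  cmp_assoc : forall X Y Z W (h : Hom Z W) (g : Hom Y Z) (f : Hom X Y),
      cmp h (cmp g f) = cmp (cmp h g) f
}.
Arguments idm {C} X : rename.
Arguments cmp {C X Y Z} g f : rename.
Arguments Hom {C} X Y : rename.

Record Functor (C D : Category) := {
  fobj :> Ob C -> Ob D;
  fmap : forall X Y, Hom X Y -> Hom (fobj X) (fobj Y);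
  fmap_id : forall X, fmap (idm X) = idm (fobj X);
  fmap_cmp : forall X Y Z (g : Hom Y Z) (f : Hom X Y),
      fmap (cmp g f) = cmp (fmap g) (fmap f)
}.
Arguments fmap {C D} F {X Y} f : rename.

Section CatNotions.
Context {C : Category}.

Definition is_iso {X Y : Ob C} (f : Hom X Y) : Prop :=
  exists g : Hom Y X, cmp g f = idm X /\ cmp f g = idm Y.

Definition is_initial (O : Ob C) : Prop :=
  forall X : Ob C, exists f : Hom O X, forall g : Hom O X, g = f.

(* The square  A --f--> X
               |i       |j
               B --g--> P   is a pushout (j is the pushout of i along f). *)
Definition is_pushout {A B X P : Ob C} (i : Hom A B) (f : Hom A X)
    (j : Hom X P) (g : Hom B P) : Prop :=
  cmp j f = cmp g i /\
  forall (Q : Ob C) (u : Hom X Q) (w : Hom B Q), cmp u f = cmp w i ->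
    exists h : Hom P Q, cmp h j = u /\ cmp h g = w /\
      forall h' : Hom P Q, cmp h' j = u -> cmp h' g = w -> h' = h.

Definition is_coproduct {X Y P : Ob C} (in1 : Hom X P) (in2 : Hom Y P) : Prop :=
  forall (Q : Ob C) (u : Hom X Q) (w : Hom Y Q),
    exists h : Hom P Q, cmp h in1 = u /\ cmp h in2 = w /\
      forall h' : Hom P Q, cmp h' in1 = u -> cmp h' in2 = w -> h' = h.
End CatNotions.

Record CofWeCat := {
  cwc :> Category;
  cof : forall X Y : Ob cwc, Hom X Y -> Prop;
  weq : forall X Y : Ob cwc, Hom X Y -> Prop
}.
Arguments cof {c X Y} f : rename.
Arguments weq {c X Y} f : rename.

Section Homotopy.
Context {C : CofWeCat}.

(* f ~_A g for (i : A -> B): (f,g) : B ⊔_A B -> X extends along a relative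
   cylinder object  B ⊔_A B >--c--> I --s-->~ B  factoring the codiagonal. *)
Definition rel_htpy {A B X : Ob C} (i : Hom A B) (f g : Hom B X) : Prop :=
  cmp f i = cmp g i /\
  exists (P : Ob C) (in1 in2 : Hom B P) (I : Ob C) (c : Hom P I) (s : Hom I B)
         (H : Hom I X),
    is_pushout i i in1 in2 /\ cof c /\ weq s /\
    cmp s (cmp c in1) = idm B /\ cmp s (cmp c in2) = idm B /\
    cmp H (cmp c in1) = f /\ cmp H (cmp c in2) = g.

Definition htpy {B X : Ob C} (f g : Hom B X) : Prop :=
  exists (O : Ob C) (o : Hom O B), is_initial O /\ rel_htpy o f g.
End Homotopy.

Record CylCat := {
  cyl :> CofWeCat;
  cof_iso : forall (X Y : Ob cyl) (f : Hom X Y), is_iso f -> cof f;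
  weq_iso : forall (X Y : Ob cyl) (f : Hom X Y), is_iso f -> weq f;
  cof_cmp : forall (X Y Z : Ob cyl) (g : Hom Y Z) (f : Hom X Y),
      cof f -> cof g -> cof (cmp g f);
  weq_cmp : forall (X Y Z : Ob cyl) (g : Hom Y Z) (f : Hom X Y),
      weq f -> weq g -> weq (cmp g f);
  weq_2of6 : forall (W X Y Z : Ob cyl) (h : Hom W X) (g : Hom X Y) (f : Hom Y Z),
      weq (cmp f g) -> weq (cmp g h) ->
      weq f /\ weq g /\ weq h /\ weq (cmp f (cmp g h));
  initial_ex : exists O : Ob cyl, is_initial O /\
      forall (X : Ob cyl) (f : Hom O X), cof f;
  pushout_ex : forall (A B X : Ob cyl) (i : Hom A B) (f : Hom A X), cof i ->
      exists (P : Ob cyl) (j : Hom X P) (g : Hom B P), is_pushout i f j g;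
  pushout_cof : forall (A B X P : Ob cyl) (i : Hom A B) (f : Hom A X)
      (j : Hom X P) (g : Hom B P), cof i -> is_pushout i f j g -> cof j;
  pushout_tcof : forall (A B X P : Ob cyl) (i : Hom A B) (f : Hom A X)
      (j : Hom X P) (g : Hom B P), cof i -> weq i -> is_pushout i f j g ->
      weq j;
  cylinder_ex : forall X : Ob cyl,
      exists (P : Ob cyl) (in1 in2 : Hom X P) (I : Ob cyl) (c : Hom P I)
             (s : Hom I X),
        is_coproduct in1 in2 /\ cof c /\ weq s /\
        cmp s (cmp c in1) = idm X /\ cmp s (cmp c in2) = idm X;
  tcof_retract : forall (X Y : Ob cyl) (f : Hom X Y), cof f -> weq f ->
      exists r : Hom Y X, cmp r f = idm X
}.

Record CylMor (C D : CylCat) := {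
  cfun :> Functor C D;
  pres_cof : forall (X Y : Ob C) (f : Hom X Y), cof f -> cof (fmap cfun f);
  pres_weq : forall (X Y : Ob C) (f : Hom X Y), weq f -> weq (fmap cfun f);
  pres_initial : forall O : Ob C, is_initial O -> is_initial (cfun O);
  pres_pushout : forall (A B X P : Ob C) (i : Hom A B) (f : Hom A X)
      (j : Hom X P) (g : Hom B P), cof i -> is_pushout i f j g ->
      is_pushout (fmap cfun i) (fmap cfun f) (fmap cfun j) (fmap cfun g)
}.

Section Coslice.
Variables (C : CofWeCat) (A : Ob C).

Record CsOb := { cs_tgt : Ob C; cs_str : Hom A cs_tgt; cs_cof : cof cs_str }.
Record CsHom (X Y : CsOb) : Type := {
  cs_mor : Hom (cs_tgt X) (cs_tgt Y);
  cs_comm : cmp cs_mor (cs_str X) = cs_str Y }.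

Lemma CsHom_eq (X Y : CsOb) (f g : CsHom X Y) : cs_mor f = cs_mor g -> f = g.
Proof.
  destruct f as [f Hf], g as [g Hg]; simpl; intros ->.
  f_equal; apply proof_irrelevance.
Qed.

Definition cs_id (X : CsOb) : CsHom X X :=
  {| cs_mor := idm (cs_tgt X); cs_comm := cmp_id_l (cs_str X) |}.

Lemma cs_cmp_comm (X Y Z : CsOb) (g : CsHom Y Z) (f : CsHom X Y) :
  cmp (cmp (cs_mor g) (cs_mor f)) (cs_str X) = cs_str Z.
Proof. rewrite <- cmp_assoc, (cs_comm f), (cs_comm g); reflexivity. Qed.

Definition cs_cmp (X Y Z : CsOb) (g : CsHom Y Z) (f : CsHom X Y) : CsHom X Z :=
  {| cs_mor := cmp (cs_mor g) (cs_mor f); cs_comm := cs_cmp_comm g f |}.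

Definition coslice_cat : Category.
Proof.
  refine {| Ob := CsOb; Hom := CsHom; idm := cs_id; cmp := cs_cmp |};
  intros; apply CsHom_eq; simpl;
  [apply cmp_id_l | apply cmp_id_r | apply cmp_assoc].
Defined.

Definition coslice : CofWeCat :=
  {| cwc := coslice_cat;
     cof := fun X Y (f : CsHom X Y) => cof (cs_mor f);
     weq := fun X Y (f : CsHom X Y) => weq (cs_mor f) |}.
End Coslice.
Arguments CsOb : clear implicits.
Arguments CsHom : clear implicits.
Arguments coslice : clear implicits.
Arguments coslice_cat : clear implicits.

Section InducedCoslice.
Variables (C D : CylCat) (F : CylMor C D) (A : Ob C).

Definition FA_obj (X : CsOb C A) : CsOb D (F A) :=
  {| cs_tgt := F (cs_tgt X); cs_str := fmap F (cs_str X);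
     cs_cof := pres_cof F (cs_cof X) |}.

Lemma FA_comm (X Y : CsOb C A) (f : CsHom C A X Y) :
  cmp (fmap F (cs_mor f)) (cs_str (FA_obj X)) = cs_str (FA_obj Y).
Proof. simpl; rewrite <- fmap_cmp, (cs_comm f); reflexivity. Qed.

Definition FA_map (X Y : CsOb C A) (f : CsHom C A X Y) : CsHom D (F A) (FA_obj X) (FA_obj Y) :=
  @Build_CsHom D (F A) (FA_obj X) (FA_obj Y) (fmap F (cs_mor f)) (FA_comm f).

Definition F_A : Functor (coslice C A) (coslice D (F A)).
Proof.
  refine (@Build_Functor (coslice C A) (coslice D (F A))
            (FA_obj : Ob (coslice C A) -> Ob (coslice D (F A)))
            (FA_map : forall X Y, Hom (C:=coslice C A) X Y -> Hom (C:=coslice D (F A)) (FA_obj X) (FA_obj Y)) _ _);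
  intros; apply CsHom_eq; simpl; [apply fmap_id | apply fmap_cmp].
Defined.
End InducedCoslice.

Section FFNotions.
Variables (C D : CofWeCat) (G : Functor C D).

Definition htpy_fully_faithful : Prop :=
  forall (A B X : Ob C) (i : Hom A B) (x : Hom A X) (v : Hom (G B) (G X)),
    cof i -> cmp v (fmap G i) = fmap G x ->
    exists v' : Hom B X, cmp v' i = x /\ rel_htpy (fmap G i) (fmap G v') v.

(* hG : hC -> hD is full: every homotopy class of maps G X -> G Y
   is the class of some G f, i.e. G f ~ v. *)
Definition h_full : Prop :=
  forall (X Y : Ob C) (v : Hom (G X) (G Y)), exists f : Hom X Y, htpy (fmap G f) v.

(* hG is faithful: [G f] = [G g] implies [f] = [g]. *)
Definition h_faithful : Prop :=
  forall (X Y : Ob C) (f g : Hom X Y), htpy (fmap G f) (fmap G g) -> htpy f g.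
End FFNotions.

(* Main.v *)
Require Import Defs.

Section Basic.
Variable C : CylCat.

Lemma rw2 {X Y Z W : Ob C} (p : Hom Y Z) (q : Hom X Y) (r : Hom X Z) (x : Hom W X) :
  cmp p q = r -> cmp p (cmp q x) = cmp r x.
Proof. intros E; rewrite cmp_assoc, E; reflexivity. Qed.

Lemma rw3 {X Y Z U W : Ob C} (p : Hom Z U) (q : Hom Y Z) (q' : Hom X Y) (r : Hom X U) (x : Hom W X) :
  cmp p (cmp q q') = r -> cmp p (cmp q (cmp q' x)) = cmp r x.
Proof. intros E; rewrite !cmp_assoc, <- E, !cmp_assoc; reflexivity. Qed.

Lemma weq_id (X : Ob C) : weq (idm X).
Proof. apply weq_iso; exists (idm X); rewrite cmp_id_l; auto. Qed.

Lemma weq_cancel_r {X Y Z : Ob C} (g : Hom Y Z) (f : Hom X Y) :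
  weq (cmp g f) -> weq g -> weq f.
Proof.
  intros H1 H2. destruct (weq_2of6 (h:=f) (g:=g) (f:=idm Z)) as [_ [_ [H _]]]; auto.
  rewrite cmp_id_l; auto.
Qed.

Lemma weq_cancel_l {X Y Z : Ob C} (g : Hom Y Z) (f : Hom X Y) :
  weq (cmp g f) -> weq f -> weq g.
Proof.
  intros H1 H2. destruct (weq_2of6 (h:=idm X) (g:=f) (f:=g)) as [H _]; auto.
  rewrite cmp_id_r; auto.
Qed.

Lemma initial_uniq {O X : Ob C} (HO : is_initial O) (f g : Hom O X) : f = g.
Proof. destruct (HO X) as [h Hh]; rewrite (Hh f), (Hh g); reflexivity. Qed.

Lemma po_ext {A B X P Q : Ob C} (i : Hom A B) (f : Hom A X) (j : Hom X P) (g : Hom B P)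
  (h1 h2 : Hom P Q) : is_pushout i f j g -> cmp h1 j = cmp h2 j -> cmp h1 g = cmp h2 g -> h1 = h2.
Proof.
  intros [Hc Hu] E1 E2.
  destruct (Hu Q (cmp h1 j) (cmp h1 g)) as [h [_ [_ Hh]]].
  { rewrite <- !cmp_assoc, Hc; reflexivity. }
  rewrite (Hh h1), (Hh h2); auto.
Qed.

Lemma cop_ext {X Y P Q : Ob C} (in1 : Hom X P) (in2 : Hom Y P) (h1 h2 : Hom P Q) :
  is_coproduct in1 in2 -> cmp h1 in1 = cmp h2 in1 -> cmp h1 in2 = cmp h2 in2 -> h1 = h2.
Proof.
  intros Hu E1 E2.
  destruct (Hu Q (cmp h1 in1) (cmp h1 in2)) as [h [_ [_ Hh]]].
  rewrite (Hh h1), (Hh h2); auto.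
Qed.

Lemma iso_cmp_cof {X Y Z : Ob C} (s : Hom Y Z) (f : Hom X Y) : is_iso s -> cof f -> cof (cmp s f).
Proof. intros Hs Hf; apply cof_cmp; auto; apply cof_iso; auto. Qed.

Lemma cop_in2_cof {X Y P : Ob C} (in1 : Hom X P) (in2 : Hom Y P) :
  is_coproduct in1 in2 -> cof in2.
Proof.
  intros Hc. destruct (initial_ex C) as [O [HO HOc]].
  destruct (HO X) as [oX _]. destruct (HO Y) as [oY _].
  destruct (pushout_ex (i:=oX) oY (HOc _ _)) as [P' [j [g Hpo]]].
  assert (cj : cof j) by (eapply pushout_cof; eauto).
  destruct Hpo as [Hcm Hu].
  destruct (Hu P in2 in1) as [sg [E1 [E2 _]]]. { apply (initial_uniq HO). }
  destruct (Hc P' g j) as [rh [R1 [R2 _]]].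
  rewrite <- E1. apply iso_cmp_cof; auto.
  exists rh. split.
  - eapply po_ext. split; [exact Hcm| exact Hu].
    + rewrite <- cmp_assoc, E1, R2, cmp_id_l; reflexivity.
    + rewrite <- cmp_assoc, E2, R1, cmp_id_l; reflexivity.
  - eapply cop_ext; [exact Hc| |].
    + rewrite <- cmp_assoc, R1, E2, cmp_id_l; reflexivity.
    + rewrite <- cmp_assoc, R2, E1, cmp_id_l; reflexivity.
Qed.

End Basic.

Section Fact.
Variable C : CylCat.

Lemma factor {X Y : Ob C} (f : Hom X Y) :
  exists (M : Ob C) (k : Hom X M) (w : Hom M Y), cof k /\ weq w /\ cmp w k = f.
Proof.
  destruct (cylinder_ex X) as [P [in1 [in2 [I [c [s [Hcop [cofc [weqs [e1 e2]]]]]]]]]].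
  destruct (initial_ex C) as [O [HO HOc]].
  destruct (HO X) as [oX _]. destruct (HO Y) as [oY _].
  destruct (pushout_ex (i:=oY) oX (HOc _ _)) as [XY [inX [inY HpoXY]]].
  assert (cinX : cof inX) by (eapply pushout_cof; [apply HOc| exact HpoXY]).
  destruct (Hcop XY inX (cmp inY f)) as [phi [P1 [P2 _]]].
  destruct (pushout_ex (i:=c) phi cofc) as [M [jM [gM HpoM]]].
  assert (cjM : cof jM) by (eapply pushout_cof; [exact cofc| exact HpoM]).
  destruct (proj2 HpoXY Y f (idm Y)) as [u0 [U1 [U2 _]]]. { apply (initial_uniq _ HO). }
  destruct (proj2 HpoM Y u0 (cmp f s)) as [w [W1 [W2 _]]].
  { eapply cop_ext; [exact Hcop| |].
    - rewrite <- cmp_assoc, P1, U1, <- !cmp_assoc, e1, cmp_id_r; reflexivity.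
    - rewrite <- cmp_assoc, P2, cmp_assoc, U2, cmp_id_l, <- !cmp_assoc, e2, cmp_id_r; reflexivity. }
  exists M, (cmp jM inX), w. split; [apply cof_cmp; auto|]. split.
  2:{ rewrite cmp_assoc, W1, U1; reflexivity. }
  apply (weq_cancel_l _ w (cmp jM inY)).
  { rewrite cmp_assoc, W1, U2; apply weq_id. }
  assert (c2c : cof (cmp c in2)) by (apply cof_cmp; auto; eapply cop_in2_cof; eauto).
  assert (c2w : weq (cmp c in2)).
  { apply (weq_cancel_r _ s (cmp c in2)); auto. rewrite e2; apply weq_id. }
  apply (pushout_tcof (i := cmp c in2) (f := f) (g := gM)); auto.
  split.
  - rewrite <- cmp_assoc, <- P2, cmp_assoc, (proj1 HpoM), cmp_assoc; reflexivity.
  - intros Q u1 w1 Hq.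
    destruct (proj2 HpoXY Q (cmp w1 (cmp c in1)) u1) as [u2 [V1 [V2 _]]]. { apply (initial_uniq _ HO). }
    destruct (proj2 HpoM Q u2 w1) as [h [H1 [H2 Hh]]].
    { eapply cop_ext; [exact Hcop| |].
      - rewrite <- cmp_assoc, P1, V1, <- cmp_assoc; reflexivity.
      - rewrite <- cmp_assoc, P2, cmp_assoc, V2, Hq, cmp_assoc; reflexivity. }
    exists h. split; [rewrite cmp_assoc, H1, V2; reflexivity|]. split; [exact H2|].
    intros h' E1 E2. apply Hh; auto.
    eapply po_ext; [exact HpoXY| |].
    + rewrite V1, <- P1, cmp_assoc, <- (cmp_assoc h' jM phi), (proj1 HpoM), cmp_assoc, E2, cmp_assoc; reflexivity.
    + rewrite V2, <- cmp_assoc; exact E1.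
Qed.

Lemma rel_cyl_ex {A B : Ob C} (a : Hom A B) : cof a ->
  exists (P : Ob C) (in1 in2 : Hom B P) (I : Ob C) (c : Hom P I) (s : Hom I B),
    is_pushout a a in1 in2 /\ cof c /\ weq s /\
    cmp s (cmp c in1) = idm B /\ cmp s (cmp c in2) = idm B.
Proof.
  intros ca. destruct (pushout_ex (i:=a) a ca) as [P [in1 [in2 Hpo]]].
  destruct (proj2 Hpo B (idm B) (idm B)) as [nab [N1 [N2 _]]]. { reflexivity. }
  destruct (factor nab) as [I [k [w [ck [ww E]]]]].
  exists P, in1, in2, I, k, w. split; [exact Hpo|]. split; [exact ck|]. split; [exact ww|].
  split; rewrite cmp_assoc, E; auto.
Qed.
End Fact.

Ltac nrm := repeat rewrite <- cmp_assoc.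
Ltac nrmin H := repeat rewrite <- cmp_assoc in H.

Section Indep.
Variable C : CylCat.

Lemma indep {A B X : Ob C} (a : Hom A B) (f g : Hom B X) : rel_htpy a f g ->
  forall (P2 : Ob C) (in1' in2' : Hom B P2) (I2 : Ob C) (c2 : Hom P2 I2) (s2 : Hom I2 B),
  is_pushout a a in1' in2' -> cof c2 -> weq s2 ->
  cmp s2 (cmp c2 in1') = idm B -> cmp s2 (cmp c2 in2') = idm B ->
  exists G : Hom I2 X, cmp G (cmp c2 in1') = f /\ cmp G (cmp c2 in2') = g.
Proof.
  intros [Hfg [P1 [in1 [in2 [J [c1 [s1 [H [Hpo1 [cc1 [ws1 [e1 [e2 [h1 h2]]]]]]]]]]]]]]
    P2 in1' in2' I2 c2 s2 Hpo2 cc2 ws2 f1 f2.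
  destruct (proj2 Hpo2 P1 in1 in2 (proj1 Hpo1)) as [phi [F1 [F2 _]]].
  destruct (pushout_ex (i:=c2) (cmp c1 phi) cc2) as [K [jJ [jI HpoK]]].
  assert (cjJ : cof jJ) by (eapply pushout_cof; [exact cc2| exact HpoK]).
  destruct (proj2 HpoK B s1 s2) as [t [T1 [T2 _]]].
  { eapply po_ext; [exact Hpo2| |]; nrm.
    - rewrite F1, e1, f1; reflexivity.
    - rewrite F2, e2, f2; reflexivity. }
  destruct (factor _ t) as [L [k [w [ck [ww E]]]]].
  assert (we : weq (cmp k jJ)).
  { apply (weq_cancel_r _ w); auto. rewrite cmp_assoc, E, T1; auto. }
  destruct (tcof_retract (cof_cmp cjJ ck) we) as [r Hr].
  exists (cmp H (cmp r (cmp k jI))).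
  pose proof (proj1 HpoK) as HK.
  split.
  - nrm. rewrite (cmp_assoc jI c2 in1'), <- HK. rewrite <- h1, <- F1.
    nrm. rewrite (cmp_assoc r k), (cmp_assoc (cmp r k) jJ), <- (cmp_assoc r k jJ), Hr, cmp_id_l. reflexivity.
  - nrm. rewrite (cmp_assoc jI c2 in2'), <- HK. rewrite <- h2, <- F2.
    nrm. rewrite (cmp_assoc r k), (cmp_assoc (cmp r k) jJ), <- (cmp_assoc r k jJ), Hr, cmp_id_l. reflexivity.
Qed.

Lemma restrict {A B X P Z : Ob C} (i : Hom A B) (x : Hom A X) (j : Hom X P) (g : Hom B P)
  (f1 f2 : Hom P Z) :
  cof i -> cof j -> is_pushout i x j g -> rel_htpy j f1 f2 -> rel_htpy i (cmp f1 g) (cmp f2 g).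
Proof.
  intros ci cj Hpo Hh.
  pose proof (proj1 Hh) as Hj.
  destruct (rel_cyl_ex _ i ci) as [QB [qb1 [qb2 [I [c [s [HpoB [cc [ws [s1 s2]]]]]]]]]].
  destruct (pushout_ex (i:=j) j cj) as [QP [qp1 [qp2 HpoP]]].
  destruct (proj2 HpoB QP (cmp qp1 g) (cmp qp2 g)) as [gam [G1 [G2 _]]].
  { nrm. rewrite <- (proj1 Hpo), !cmp_assoc, (proj1 HpoP); reflexivity. }
  destruct (pushout_ex (i:=c) gam cc) as [K [kq [kI HpoK]]].
  assert (ckq : cof kq) by (eapply pushout_cof; [exact cc| exact HpoK]).
  destruct (proj2 HpoP P (idm P) (idm P) eq_refl) as [tau [Ta1 [Ta2 _]]].
  destruct (proj2 HpoK P tau (cmp g s)) as [t [T1 [T2 _]]].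
  { eapply po_ext; [exact HpoB| |]; nrm.
    - rewrite G1, s1, cmp_id_r, cmp_assoc, Ta1, cmp_id_l; reflexivity.
    - rewrite G2, s2, cmp_id_r, cmp_assoc, Ta2, cmp_id_l; reflexivity. }
  destruct (factor _ t) as [L [k [w [ck [ww E]]]]].
  destruct (indep j f1 f2 Hh QP qp1 qp2 L (cmp k kq) w HpoP (cof_cmp ckq ck) ww) as [Gm [Gm1 Gm2]].
  { nrm. rewrite cmp_assoc, E, cmp_assoc, T1, Ta1; reflexivity. }
  { nrm. rewrite cmp_assoc, E, cmp_assoc, T1, Ta2; reflexivity. }
  nrmin Gm1. nrmin Gm2.
  split.
  { nrm. rewrite <- (proj1 Hpo), !cmp_assoc, Hj; reflexivity. }
  exists QB, qb1, qb2, I, c, s, (cmp Gm (cmp k kI)).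
  split; [exact HpoB|]. split; [exact cc|]. split; [exact ws|]. split; [exact s1|]. split; [exact s2|].
  pose proof (proj1 HpoK) as HK.
  split.
  - rewrite <- Gm1. nrm. rewrite (cmp_assoc kI c qb1), <- HK. nrm. rewrite G1. nrm. reflexivity.
  - rewrite <- Gm2. nrm. rewrite (cmp_assoc kI c qb2), <- HK. nrm. rewrite G2. nrm. reflexivity.
Qed.
End Indep.

Lemma g_initial_uniq {K : Category} {O X : Ob K} (HO : is_initial O) (f g : Hom O X) : f = g.
Proof. destruct (HO X) as [h Hh]; rewrite (Hh f), (Hh g); reflexivity. Qed.

Lemma g_po_ext {K : Category} {A B X P Q : Ob K} (i : Hom A B) (f : Hom A X) (j : Hom X P) (g : Hom B P)
  (h1 h2 : Hom P Q) : is_pushout i f j g -> cmp h1 j = cmp h2 j -> cmp h1 g = cmp h2 g -> h1 = h2.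
Proof.
  intros [Hc Hu] E1 E2.
  destruct (Hu Q (cmp h1 j) (cmp h1 g)) as [h [_ [_ Hh]]].
  { rewrite <- !cmp_assoc, Hc; reflexivity. }
  rewrite (Hh h1), (Hh h2); auto.
Qed.

Lemma csm {C : CofWeCat} {A : Ob C} {X Y : CsOb C A} {f g : CsHom C A X Y} :
  f = g -> cs_mor f = cs_mor g.
Proof. intros ->; reflexivity. Qed.

Lemma cs_initial (C : CylCat) (A : Ob C) (O : CsOb C A) :
  is_iso (cs_str O) -> is_initial (C := coslice C A) O.
Proof.
  intros [g [G1 G2]] Z.
  assert (E : cmp (cmp (cs_str Z) g) (cs_str O) = cs_str Z)
    by (rewrite <- cmp_assoc, G1, cmp_id_r; reflexivity).
  exists (Build_CsHom (X:=O) (Y:=Z) E).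
  intros h. apply CsHom_eq. simpl. rewrite <- (cs_comm h), <- cmp_assoc, G2, cmp_id_r; reflexivity.
Qed.

Lemma transfer (C : CylCat) (A : Ob C) (X0 B X : CsOb C A) (i : CsHom C A X0 B)
  (f g : CsHom C A B X) :
  cof (cs_mor i) -> rel_htpy (cs_mor i) (cs_mor f) (cs_mor g) ->
  @rel_htpy (coslice C A) X0 B X i f g.
Proof.
  intros ci [Hfg [P [in1 [in2 [I [c [s [H [Hpo [cc [ws [e1 [e2 [h1 h2]]]]]]]]]]]]]].
  assert (cin1 : cof in1) by (eapply pushout_cof; [exact ci| exact Hpo]).
  set (Pc := Build_CsOb (cs_tgt := P) (cs_str := cmp in1 (cs_str B)) (cof_cmp (cs_cof B) cin1)).
  set (Ic := Build_CsOb (cs_tgt := I) (cs_str := cmp c (cmp in1 (cs_str B)))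
                        (cof_cmp (cof_cmp (cs_cof B) cin1) cc)).
  set (in1c := Build_CsHom (X:=B) (Y:=Pc) (cs_mor:=in1) eq_refl).
  assert (E2 : cmp in2 (cs_str B) = cs_str Pc).
  { simpl. rewrite <- (cs_comm i), !cmp_assoc, (proj1 Hpo); reflexivity. }
  set (in2c := Build_CsHom (X:=B) (Y:=Pc) (cs_mor:=in2) E2).
  set (ccs := Build_CsHom (X:=Pc) (Y:=Ic) (cs_mor:=c) eq_refl).
  assert (Es : cmp s (cs_str Ic) = cs_str B).
  { simpl. rewrite (cmp_assoc c in1), (cmp_assoc s (cmp c in1)), e1, cmp_id_l; reflexivity. }
  set (sc := Build_CsHom (X:=Ic) (Y:=B) (cs_mor:=s) Es).
  assert (Eh : cmp H (cs_str Ic) = cs_str X).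
  { simpl. rewrite (cmp_assoc c in1), (cmp_assoc H (cmp c in1)), h1, (cs_comm f); reflexivity. }
  set (Hc := Build_CsHom (X:=Ic) (Y:=X) (cs_mor:=H) Eh).
  split. { apply CsHom_eq; simpl; exact Hfg. }
  exists Pc, in1c, in2c, Ic, ccs, sc, Hc.
  split.
  { split. { apply CsHom_eq; simpl; exact (proj1 Hpo). }
    intros Q u w Huw. pose proof (csm Huw) as Huw'. simpl in Huw'.
    destruct (proj2 Hpo (cs_tgt Q) (cs_mor u) (cs_mor w) Huw') as [h [F1 [F2 Fu]]].
    assert (Eq : cmp h (cs_str Pc) = cs_str Q).
    { simpl. rewrite cmp_assoc, F1, (cs_comm u); reflexivity. }
    exists (Build_CsHom (X:=Pc) (Y:=Q) (cs_mor:=h) Eq).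
    split; [apply CsHom_eq; exact F1|]. split; [apply CsHom_eq; exact F2|].
    intros h' G1 G2. apply CsHom_eq; simpl. apply Fu.
    - exact (csm G1).
    - exact (csm G2). }
  split; [exact cc|]. split; [exact ws|].
  split; [apply CsHom_eq; exact e1|]. split; [apply CsHom_eq; exact e2|].
  split; apply CsHom_eq; assumption.
Qed.

Lemma untransfer (C : CylCat) (A : Ob C) (B X : CsOb C A) (f g : CsHom C A B X) :
  @htpy (coslice C A) B X f g -> rel_htpy (cs_str B) (cs_mor f) (cs_mor g).
Proof.
  intros [O [o [HO [Heq [Pc [in1 [in2 [I [c [s [H [Hpo [cc [ws [e1 [e2 [h1 h2]]]]]]]]]]]]]]]]].
  split. { rewrite (cs_comm f), (cs_comm g); reflexivity. }
  destruct (pushout_ex (i:=cs_str B) (cs_str B) (cs_cof B)) as [P [a [b HpD]]].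
  assert (ca : cof a) by (eapply pushout_cof; [exact (cs_cof B)| exact HpD]).
  destruct (proj2 HpD (cs_tgt Pc) (cs_mor in1) (cs_mor in2)) as [phi [F1 [F2 Fu]]].
  { rewrite (cs_comm in1), (cs_comm in2); reflexivity. }
  set (PDc := Build_CsOb (cs_tgt := P) (cs_str := cmp a (cs_str B)) (cof_cmp (cs_cof B) ca)).
  set (ac := Build_CsHom (X:=B) (Y:=PDc) (cs_mor:=a) eq_refl).
  assert (Eb : cmp b (cs_str B) = cs_str PDc) by (simpl; symmetry; exact (proj1 HpD)).
  set (bc := Build_CsHom (X:=B) (Y:=PDc) (cs_mor:=b) Eb).
  destruct (proj2 Hpo PDc ac bc (g_initial_uniq HO _ _)) as [psi [S1 [S2 _]]].
  pose proof (csm S1) as S1'. pose proof (csm S2) as S2'. simpl in S1', S2'.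
  assert (Ephi : cmp phi (cs_str PDc) = cs_str Pc).
  { simpl. rewrite cmp_assoc, F1, (cs_comm in1); reflexivity. }
  set (phic := Build_CsHom (X:=PDc) (Y:=Pc) (cs_mor:=phi) Ephi).
  assert (Cl1 : @cmp (coslice C A) _ _ _ phic psi = idm Pc).
  { eapply g_po_ext; [exact Hpo| |]; apply CsHom_eq; simpl.
    - rewrite <- cmp_assoc, S1', F1, cmp_id_l; reflexivity.
    - rewrite <- cmp_assoc, S2', F2, cmp_id_l; reflexivity. }
  pose proof (csm Cl1) as Cl1'. simpl in Cl1'.
  assert (Cl2 : cmp (cs_mor psi) phi = idm P).
  { eapply g_po_ext; [exact HpD| |].
    - rewrite <- cmp_assoc, F1, cmp_id_l; exact S1'.
    - rewrite <- cmp_assoc, F2, cmp_id_l; exact S2'. }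
  pose proof (csm e1) as e1'. pose proof (csm e2) as e2'.
  pose proof (csm h1) as h1'. pose proof (csm h2) as h2'. simpl in e1', e2', h1', h2'.
  exists P, a, b, (cs_tgt I), (cmp (cs_mor c) phi), (cs_mor s), (cs_mor H).
  split; [exact HpD|]. split.
  { apply cof_cmp; [apply cof_iso; exists (cs_mor psi); split; assumption| exact cc]. }
  split; [exact ws|].
  nrm. rewrite F1, F2. repeat split; assumption.
Qed.

Lemma idm_iso {K : Category} (X : Ob K) : is_iso (idm X).
Proof. exists (idm X); rewrite cmp_id_l; auto. Qed.

Section Main.
Variables (C D : CylCat) (F : CylMor C D).

Definition OA (A : Ob C) : CsOb C A :=
  Build_CsOb (cs_tgt := A) (cs_str := idm A) (cof_iso (idm_iso A)).

Lemma d13 : htpy_fully_faithful F -> forall A, htpy_fully_faithful (F_A F A).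
Proof.
  intros H1 A A' B X i x v ci Hv.
  pose proof (csm Hv) as Hv'. simpl in Hv'.
  destruct (H1 _ _ _ (cs_mor i) (cs_mor x) (cs_mor v) ci Hv') as [v0 [E0 Hr]].
  assert (Ev : cmp v0 (cs_str B) = cs_str X).
  { rewrite <- (cs_comm i), cmp_assoc, E0, (cs_comm x); reflexivity. }
  exists (Build_CsHom (X:=B) (Y:=X) Ev). split. { apply CsHom_eq; exact E0. }
  apply transfer. { simpl; apply pres_cof; exact ci. } exact Hr.
Qed.

Lemma d32 : (forall A, htpy_fully_faithful (F_A F A)) -> forall A, h_full (F_A F A).
Proof.
  intros H3 A X Y v.
  set (iX := Build_CsHom (X:=OA A) (Y:=X) (cs_mor := cs_str X) (cmp_id_r _)).
  set (iY := Build_CsHom (X:=OA A) (Y:=Y) (cs_mor := cs_str Y) (cmp_id_r _)).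
  destruct (H3 A (OA A) X Y iX iY v (cs_cof X)) as [v' [_ Hr]].
  { apply CsHom_eq; simpl; exact (cs_comm v). }
  exists v'. exists (FA_obj F (OA A)), (fmap (F_A F A) iX). split; [|exact Hr].
  apply cs_initial. simpl. rewrite fmap_id. apply idm_iso.
Qed.

Lemma d21 : (forall A, h_full (F_A F A)) -> htpy_fully_faithful F.
Proof.
  intros H2 A B X i x v ci Hv.
  destruct (pushout_ex (i:=i) x ci) as [P [j [g Hpo]]].
  assert (cj : cof j) by (eapply pushout_cof; [exact ci| exact Hpo]).
  pose proof (pres_pushout F ci Hpo) as HpoF.
  destruct (proj2 HpoF (F X) (idm (F X)) v) as [w [W1 [W2 _]]].
  { rewrite cmp_id_l, Hv; reflexivity. }
  set (PX := Build_CsOb (cs_tgt:=P) (cs_str:=j) cj).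
  set (XX := OA X).
  assert (Ew : cmp w (cs_str (FA_obj F PX)) = cs_str (FA_obj F XX)).
  { simpl. rewrite W1, fmap_id; reflexivity. }
  set (wc := Build_CsHom (X:=FA_obj F PX) (Y:=FA_obj F XX) Ew).
  destruct (H2 X PX XX wc) as [f Hf].
  pose proof (untransfer D (F X) _ _ _ _ Hf) as Hu. simpl in Hu.
  pose proof (restrict D (fmap F i) (fmap F x) (fmap F j) (fmap F g) (fmap F (cs_mor f)) w
                (pres_cof F ci) (pres_cof F cj) HpoF Hu) as R.
  exists (cmp (cs_mor f) g). split.
  - pose proof (cs_comm f) as Cf. simpl in Cf.
    rewrite <- cmp_assoc. transitivity (cmp (cs_mor f) (cmp j x)).
    { f_equal. symmetry; exact (proj1 Hpo). }
    rewrite cmp_assoc. transitivity (cmp (idm X) x). { f_equal; exact Cf. }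
    apply cmp_id_l.
  - rewrite fmap_cmp, <- W2. exact R.
Qed.

Lemma d1faith : htpy_fully_faithful F -> forall A, h_faithful (F_A F A).
Proof.
  intros H1 A B X f g Hh.
  pose proof (untransfer D (F A) _ _ _ _ Hh) as Hu. simpl in Hu.
  destruct (rel_cyl_ex C (cs_str B) (cs_cof B)) as [P [in1 [in2 [I [k [s [Hpo [ck [ws [e1 e2]]]]]]]]]].
  pose proof (pres_pushout F (cs_cof B) Hpo) as HpoF.
  destruct (indep D (fmap F (cs_str B)) (fmap F (cs_mor f)) (fmap F (cs_mor g)) Hu
              (F P) (fmap F in1) (fmap F in2) (F I) (fmap F k) (fmap F s) HpoF
              (pres_cof F ck) (pres_weq F ws)) as [G [G1 G2]].
  { rewrite <- !fmap_cmp, e1, fmap_id; reflexivity. }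
  { rewrite <- !fmap_cmp, e2, fmap_id; reflexivity. }
  destruct (proj2 Hpo (cs_tgt X) (cs_mor f) (cs_mor g)) as [cp [C1 [C2 _]]].
  { rewrite (cs_comm f), (cs_comm g); reflexivity. }
  destruct (H1 _ _ _ k cp G ck) as [v' [V1 _]].
  { eapply g_po_ext; [exact HpoF| |].
    - rewrite <- cmp_assoc, G1, <- fmap_cmp, C1; reflexivity.
    - rewrite <- cmp_assoc, G2, <- fmap_cmp, C2; reflexivity. }
  set (ib := Build_CsHom (X:=OA A) (Y:=B) (cs_mor := cs_str B) (cmp_id_r _)).
  exists (OA A), ib. split. { apply cs_initial. apply idm_iso. }
  apply transfer. { exact (cs_cof B). }
  split. { simpl. rewrite (cs_comm f), (cs_comm g); reflexivity. }
  exists P, in1, in2, I, k, s, v'.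
  split; [exact Hpo|]. split; [exact ck|]. split; [exact ws|]. split; [exact e1|]. split; [exact e2|].
  split; rewrite cmp_assoc, V1; assumption.
Qed.

End Main.

Theorem mainTheorem2 (C D : CylCat) (F : CylMor C D) :
  (htpy_fully_faithful F <-> forall A : Ob C, h_full (F_A F A)) /\
  (htpy_fully_faithful F <-> forall A : Ob C, htpy_fully_faithful (F_A F A)) /\
  (htpy_fully_faithful F <->
     forall A : Ob C, h_full (F_A F A) /\ h_faithful (F_A F A)).
Proof.
  pose proof (d13 C D F) as A13. pose proof (d32 C D F) as A32.
  pose proof (d21 C D F) as A21. pose proof (d1faith C D F) as A1f.
  split; [|split]; split; intros H.
  - exact (A32 (A13 H)).
  - exact (A21 H).
  - exact (A13 H).
  - exact (A21 (A32 H)).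
  - intros A; split; [exact (A32 (A13 H) A)| exact (A1f H A)].
  - apply A21; intros A; exact (proj1 (H A)).
Qed.
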